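(* Let $M=(S,\Sigma,\delta,s_0,F)$ be a deterministic finite automaton, let $T\ge 1$ be an integer, and for each $s\in S$ let $P(\cdot\mid s)$ and $Q(\cdot\mid s)$ be probability distributions on $\Sigma$. Define distributions $P$ and $Q$ on $\Sigma^T$ by $P(x)=\prod_{t=1}^T P(\sigma_t\mid s_t)$ and $Q(x)=\prod_{t=1}^T Q(\sigma_t\mid s_t)$ for $x=\sigma_1\cdots\sigma_T$, where $s_1\cdots s_{T+1}$ is the state sequence induced by $x$, and let $f^*(x)=\mathbb{1}(s_{T+1}\in F)$. Define $P_t$ on $S$ by $P_1(s')=\mathbb{1}(s'=s_0)$ and $P_t(s')=\mathbb{P}_{s\sim P_{t-1},\sigma\sim P(\cdot\mid s)}[s'=\delta(s,\sigma)]$ for $t\ge2$, and $P_t(s,\sigma)=P_t(s)P(\sigma\mid s)$. Let $\hat g:S\times\Sigma\to S$ and $\hat h:S\to\{0,1\}$ be arbitrary functions, and define $\hat f:\Sigma^T\to\{0,1\}$ by $\hat f(\sigma_1\cdots\sigma_T)=\hat h(\hat s_{T+1})$, where $\hat s_1=s_0$ and $\hat s_{t+1}=\hat g(\hat s_t,\sigma_t)$. Let $\epsilon=\max_{s\in S}\mathrm{TV}(P(\sigma\mid s),Q(\sigma\mid s))$ and $$\tilde L_P(\hat f)=\sum_{t=1}^T L_{P_t}(\hat g)+L_{P_{T+1}}(\hat h).$$ Then $$L_Q(\hat f)\le \tilde L_P(\hat f)+2T^2\epsilon.$$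
   Context: A deterministic finite automaton $M=(S,\Sigma,\delta,s_0,F)$ has a finite state set $S$, a finite alphabet $\Sigma$, a transition function $\delta:S\times\Sigma\to S$, an initial state $s_0\in S$ and final states $F\subseteq S$. For $x=\sigma_1\cdots\sigma_T$, the induced state sequence is $s_1=s_0$, $s_{t+1}=\delta(s_t,\sigma_t)$. Losses: $L_Q(\hat f)=\mathbb{P}_{x\sim Q}[\hat f(x)\neq f^*(x)]$; $L_{P_t}(\hat g)=\mathbb{P}_{(s,\sigma)\sim P_t(s,\sigma)}[\hat g(s,\sigma)\neq\delta(s,\sigma)]$; $L_{P_{T+1}}(\hat h)=\mathbb{P}_{s\sim P_{T+1}}[\hat h(s)\neq\mathbb{1}(s\in F)]$. The total variation distance is defined without the factor $1/2$: $\mathrm{TV}(\mu,\nu)=\sum_a|\mu(a)-\nu(a)|$. *)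

(* Defs.v *)
From HB Require Import structures.
From mathcomp Require Import all_boot all_order all_algebra.
Set Implicit Arguments. Unset Strict Implicit. Unset Printing Implicit Defensive.
Import Order.TTheory GRing.Theory Num.Theory.
Local Open Scope ring_scope.

Section DFA.
Variables (R : realFieldType) (S Sigma : finType).
Variables (delta : S -> Sigma -> S) (s0 : S) (F : {set S}).

Definition is_cond_dist (K : S -> Sigma -> R) : Prop :=
  forall s, (forall a, 0 <= K s a) /\ \sum_(a : Sigma) K s a = 1.

Definition run (g : S -> Sigma -> S) (s : S) (x : seq Sigma) : S := foldl g s x.

Fixpoint word_prob (K : S -> Sigma -> R) (s : S) (x : seq Sigma) : R :=
  match x with
  | [::] => 1
  | a :: x' => K s a * word_prob K (delta s a) x'
  end.

Definition fstar (x : seq Sigma) : bool := run delta s0 x \in F.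

Definition fhat (g : S -> Sigma -> S) (h : S -> bool) (x : seq Sigma) : bool :=
  h (run g s0 x).

Definition loss_seq (T : nat) (K : S -> Sigma -> R) (f : seq Sigma -> bool) : R :=
  \sum_(x : T.-tuple Sigma) word_prob K s0 x * (f x != fstar x)%:R.

(* state_dist K n = P_{n+1} of the paper:
   P_1 = indicator of s0, P_{t}(s') = sum_{s,sigma} P_{t-1}(s) K(sigma|s) 1(s' = delta s sigma) *)
Fixpoint state_dist (K : S -> Sigma -> R) (n : nat) : S -> R :=
  match n with
  | 0 => fun s' => (s' == s0)%:R
  | n'.+1 => fun s' =>
      \sum_(s : S) \sum_(a : Sigma) state_dist K n' s * K s a * (s' == delta s a)%:R
  end.

Definition loss_trans (K : S -> Sigma -> R) (t : nat) (g : S -> Sigma -> S) : R :=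
  \sum_(s : S) \sum_(a : Sigma)
     state_dist K t.-1 s * K s a * (g s a != delta s a)%:R.

Definition loss_final (K : S -> Sigma -> R) (t : nat) (h : S -> bool) : R :=
  \sum_(s : S) state_dist K t.-1 s * (h s != (s \in F))%:R.

Definition tilde_loss (K : S -> Sigma -> R) (T : nat) (g : S -> Sigma -> S)
  (h : S -> bool) : R :=
  \sum_(1 <= t < T.+1) loss_trans K t g + loss_final K T.+1 h.

End DFA.

(* total variation WITHOUT the factor 1/2 *)
Definition TV (R : realFieldType) (Sigma : finType) (mu nu : Sigma -> R) : R :=
  \sum_(a : Sigma) `|mu a - nu a|.

(* epsilon = max_s TV(P(.|s), Q(.|s)) (TV >= 0, so 0 is a neutral start) *)
Definition eps_max (R : realFieldType) (S Sigma : finType) (P Q : S -> Sigma -> R) : R :=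
  \big[Num.max/0]_(s : S) TV (P s) (Q s).

(* Main.v *)
Require Import Defs.
From mathcomp Require Import all_boot all_order all_algebra.
From mathcomp Require Import lra zify.
Import Order.TTheory GRing.Theory Num.Theory.
Local Open Scope ring_scope.

Section Proof.
Variables (R : realFieldType) (S Sigma : finType) (delta : S -> Sigma -> S) (F : {set S}).

Lemma sum_tuple_cons n (G : seq Sigma -> R) :
  \sum_(x : n.+1.-tuple Sigma) G x = \sum_(a : Sigma) \sum_(x : n.-tuple Sigma) G (a :: x).
Proof.
rewrite pair_big /=.
rewrite (reindex (fun p : Sigma * n.-tuple Sigma => [tuple of p.1 :: p.2])) /=.
  by [].
exists (fun x : n.+1.-tuple Sigma => (thead x, behead_tuple x)).
- by case=> a x _ /=; congr pair; apply/val_inj.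
- move=> x _; apply/val_inj => /=.
  by case: x => [[|b s] //=].
Qed.

Lemma sum_tuple0 (G : seq Sigma -> R) :
  \sum_(x : 0.-tuple Sigma) G x = G [::].
Proof.
rewrite (eq_bigr (fun _ => G [::])); last by move=> x _; rewrite tuple0.
by rewrite sumr_const card_tuple expn0.
Qed.

Definition W (K : S -> Sigma -> R) n s (G : seq Sigma -> R) :=
  \sum_(x : n.-tuple Sigma) word_prob delta K s x * G x.

Lemma W0 K s G : W K 0 s G = G [::].
Proof. by rewrite /W (sum_tuple0 (fun l => word_prob delta K s l * G l)) /= mul1r. Qed.

Lemma WS K n s G :
  W K n.+1 s G = \sum_(a : Sigma) K s a * W K n (delta s a) (fun x => G (a :: x)).
Proof.
rewrite /W (sum_tuple_cons _ (fun l => word_prob delta K s l * G l)); apply: eq_bigr => a _ /=.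
rewrite mulr_sumr; apply: eq_bigr => x _ /=; by rewrite mulrA.
Qed.

Lemma W_bounds K n s G : is_cond_dist K -> (forall x, 0 <= G x <= 1) ->
  0 <= W K n s G <= 1.
Proof.
move=> hK; elim: n s G => [|n IH] s G hG; first by rewrite W0.
rewrite WS; have [hK0 hK1] := hK s.
apply/andP; split.
  apply: sumr_ge0 => a _; apply: mulr_ge0 => //.
  by case/andP: (IH (delta s a) (fun x => G (a :: x)) (fun x => hG _)).
rewrite -hK1; apply: ler_sum => a _.
have /andP[_ h1] := IH (delta s a) (fun x => G (a :: x)) (fun x => hG _).
by rewrite -{2}(mulr1 (K s a)); apply: ler_wpM2l.
Qed.

Lemma sum_ind (s : S) (X : S -> R) : \sum_(u : S) (u == s)%:R * X u = X s.
Proof.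
rewrite (bigD1 s) //= eqxx mul1r big1 ?addr0 // => u /negPf ->; by rewrite mul0r.
Qed.

Lemma mix1 (k : Sigma -> R) (D : Sigma -> S -> R) (Y : S -> R) :
  \sum_(u : S) (\sum_(a : Sigma) k a * D a u) * Y u
  = \sum_(a : Sigma) k a * \sum_(u : S) D a u * Y u.
Proof.
under eq_bigr do rewrite mulr_suml.
rewrite exchange_big; apply: eq_bigr => a _.
rewrite mulr_sumr; apply: eq_bigr => u _; by rewrite mulrA.
Qed.

Lemma mix2 (k : Sigma -> R) (D : Sigma -> S -> R) (X : S -> Sigma -> R) :
  \sum_(u : S) \sum_(b : Sigma) (\sum_(a : Sigma) k a * D a u) * X u b
  = \sum_(a : Sigma) k a * \sum_(u : S) \sum_(b : Sigma) D a u * X u b.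
Proof.
under eq_bigr do rewrite -mulr_sumr.
rewrite mix1; apply: eq_bigr => a _; congr (_ * _).
by apply: eq_bigr => u _; rewrite mulr_sumr.
Qed.

Lemma SD_S (K : S -> Sigma -> R) n s s' :
  state_dist delta s K n.+1 s' =
  \sum_(u : S) \sum_(a : Sigma) state_dist delta s K n u * K u a * (s' == delta u a)%:R.
Proof. by []. Qed.

Lemma SD_front (K : S -> Sigma -> R) n s s' :
  state_dist delta s K n.+1 s' =
  \sum_(a : Sigma) K s a * state_dist delta (delta s a) K n s'.
Proof.
elim: n s' => [|n IH] s'.
  rewrite /=.
  under eq_bigr do under eq_bigr do rewrite -mulrA.
  under eq_bigr do rewrite -mulr_sumr.
  by rewrite sum_ind.
rewrite SD_S.
under eq_bigr do under eq_bigr do rewrite IH -mulrA.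
rewrite mix2; apply: eq_bigr => a _; congr (_ * _).
by rewrite SD_S; apply: eq_bigr => u _; apply: eq_bigr => b _; rewrite mulrA.
Qed.

Lemma SD_ge0 (K : S -> Sigma -> R) n s u : is_cond_dist K -> 0 <= state_dist delta s K n u.
Proof.
move=> hK; elim: n u => [|n IH] u /=; first by rewrite ler0n.
apply: sumr_ge0 => v _; apply: sumr_ge0 => a _.
by apply: mulr_ge0; [apply: mulr_ge0 => //; case: (hK v) | rewrite ler0n].
Qed.


Lemma step1 (P Q : S -> Sigma -> R) (e : R) n s G :
  is_cond_dist P -> is_cond_dist Q -> (forall x, 0 <= G x <= 1) ->
  (forall s, TV (P s) (Q s) <= e) ->
  W Q n s G <= W P n s G + n%:R * e.
Proof.
move=> hP hQ hG0 hTV; elim: n s G hG0 => [|n IH] s G hG.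
  by rewrite !W0 mul0r addr0.
rewrite !WS.
set wq := fun a => W Q n (delta s a) (fun x => G (a :: x)).
set wp := fun a => W P n (delta s a) (fun x => G (a :: x)).
have [hQ0 hQ1] := hQ s.
have wpb a : 0 <= wp a <= 1 by apply: W_bounds => // x; apply: hG.
have h1 : \sum_a Q s a * wq a <= \sum_a Q s a * (wp a + n%:R * e).
  apply: ler_sum => a _; apply: ler_wpM2l => //; apply: IH => x; apply: hG.
have h2 : \sum_a Q s a * (wp a + n%:R * e) = \sum_a Q s a * wp a + n%:R * e.
  under eq_bigr do rewrite mulrDr.
  by rewrite big_split /= -mulr_suml hQ1 mul1r.
have h3 : \sum_a Q s a * wp a - \sum_a P s a * wp a <= e.
  rewrite -sumrB; apply: le_trans (hTV s); rewrite /TV; apply: ler_sum => a _.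
  rewrite -mulrBl distrC.
  have /andP[w0 w1] := wpb a.
  apply: (@le_trans _ _ (`|Q s a - P s a| * wp a)).
    by apply: ler_wpM2r => //; apply: ler_norm.
  by rewrite -{2}(mulr1 (`|Q s a - P s a|)); apply: ler_wpM2l.
rewrite /= in h1 h2 h3 *.
rewrite mulrSr mulrDl mul1r.
lra.
Qed.


Lemma eq_W K n s G G' : (forall x, G x = G' x) -> W K n s G = W K n s G'.
Proof. by move=> e; apply: eq_bigr => x _; rewrite e. Qed.

Definition LT (K : S -> Sigma -> R) (g : S -> Sigma -> S) s t :=
  \sum_(u : S) \sum_(a : Sigma) state_dist delta s K t u * K u a * (g u a != delta u a)%:R.
Definition LF (K : S -> Sigma -> R) (h : S -> bool) s t :=
  \sum_(u : S) state_dist delta s K t u * (h u != (u \in F))%:R.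

Lemma LT_front K g s t : LT K g s t.+1 = \sum_a K s a * LT K g (delta s a) t.
Proof.
rewrite /LT; under eq_bigr do under eq_bigr do rewrite SD_front -mulrA.
rewrite mix2; apply: eq_bigr => a _; congr (_ * _).
by apply: eq_bigr => u _; apply: eq_bigr => b _; rewrite mulrA.
Qed.

Lemma LF_front K h s t : LF K h s t.+1 = \sum_a K s a * LF K h (delta s a) t.
Proof. by rewrite /LF; under eq_bigr do rewrite SD_front; rewrite mix1. Qed.

Lemma LT0 K g s : LT K g s 0 = \sum_a K s a * (g s a != delta s a)%:R.
Proof.
rewrite /LT /=; under eq_bigr do under eq_bigr do rewrite -mulrA.
under eq_bigr do rewrite -mulr_sumr.
by rewrite sum_ind.
Qed.

Lemma LF0 K h s : LF K h s 0 = (h s != (s \in F))%:R.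
Proof. by rewrite /LF /= sum_ind. Qed.

Lemma LT_ge0 K g s t : is_cond_dist K -> 0 <= LT K g s t.
Proof.
move=> hK; apply: sumr_ge0 => u _; apply: sumr_ge0 => a _.
apply: mulr_ge0; last by rewrite ler0n.
by apply: mulr_ge0; [apply: SD_ge0 | case: (hK u)].
Qed.

Lemma LF_ge0 K h s t : is_cond_dist K -> 0 <= LF K h s t.
Proof.
move=> hK; apply: sumr_ge0 => u _; apply: mulr_ge0; last by rewrite ler0n.
exact: SD_ge0.
Qed.

Lemma step2 (P : S -> Sigma -> R) g h n s : is_cond_dist P ->
  W P n s (fun x => (h (run g s x) != (run delta s x \in F))%:R)
  <= \sum_(0 <= t < n) LT P g s t + LF P h s n.
Proof.
move=> hP; elim: n s => [|n IH] s.
  by rewrite W0 big_geq // add0r LF0.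
rewrite WS big_nat_recl // LT0 LF_front.
under [X in _ <= _ + X + _]eq_bigr do rewrite LT_front.
rewrite exchange_big /= -addrA -big_split /=.
under [X in _ <= _ + X]eq_bigr do rewrite -mulr_sumr -mulrDr.
rewrite -big_split /=; apply: ler_sum => a _.
have [hP0 hP1] := hP s.
rewrite -mulrDr; apply: ler_wpM2l => //.
case: (eqVneq (g s a) (delta s a)) => [eg|ng].
  rewrite eg /= add0r; exact: IH.
rewrite /=.
have /andP[_ w1] : 0 <= W P n (delta s a)
   (fun x => (h (run g (g s a) x) != (run delta (delta s a) x \in F))%:R) <= 1.
  by apply: W_bounds => // x; case: (h (run g (g s a) x) != _); rewrite /= ?ler01 ?lexx ?ler0n.
have H0 : 0 <= \sum_(0 <= t < n) LT P g (delta s a) t + LF P h (delta s a) n.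
  by apply: addr_ge0; [apply: sumr_ge0 => t _; exact: LT_ge0 | exact: LF_ge0].
lra.
Qed.

End Proof.

Theorem theorem4p6 (R : realFieldType) (S Sigma : finType)
  (delta : S -> Sigma -> S) (s0 : S) (F : {set S}) (T : nat) (hT : (1 <= T)%N)
  (P Q : S -> Sigma -> R) (hP : is_cond_dist P) (hQ : is_cond_dist Q)
  (ghat : S -> Sigma -> S) (hhat : S -> bool) :
  loss_seq delta s0 F T Q (fhat s0 ghat hhat)
  <= tilde_loss delta s0 F P T ghat hhat + 2 * (T ^ 2)%:R * eps_max P Q.
Proof.
pose G := fun x => (hhat (run ghat s0 x) != (run delta s0 x \in F))%:R : R.
have -> : loss_seq delta s0 F T Q (fhat s0 ghat hhat) = W R S Sigma delta Q T s0 G by [].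
have -> : tilde_loss delta s0 F P T ghat hhat
    = \sum_(0 <= t < T) LT R S Sigma delta P ghat s0 t + LF R S Sigma delta F P hhat s0 T.
  by rewrite /tilde_loss big_add1.
have hTV s : TV (P s) (Q s) <= eps_max P Q.
  by rewrite /eps_max (bigD1 s) //= le_max lexx.
have he : 0 <= eps_max P Q.
  rewrite /eps_max; elim/big_ind: _ => //.
    by move=> x y hx _; rewrite le_max hx.
  by move=> s _; apply: sumr_ge0 => a _; apply: normr_ge0.
have hG x : 0 <= G x <= 1 by rewrite /G; case: (_ != _); rewrite /= ?ler01 ?lexx.
have h1 := @step1 R S Sigma delta P Q _ T s0 G hP hQ hG hTV.
have h2 := @step2 R S Sigma delta F P ghat hhat T s0 hP.
have h3 : T%:R * eps_max P Q <= 2 * (T ^ 2)%:R * eps_max P Q.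
  apply: ler_wpM2r => //.
  have -> : 2 * (T ^ 2)%:R = (2 * T ^ 2)%:R :> R by rewrite natrM.
  rewrite ler_nat; nia.
rewrite /G in h1 h2 *.
lra.
Qed.
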